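(* Let $f:\mathbb{R}^n\to\mathbb{R}$ be bounded below, and suppose $\nabla f$ is Lipschitz continuous with constant $L$ on a (sufficiently large) open bounded domain $\mathcal{X}\subset\mathbb{R}^n$. Let $q=(n^2+3n)/2$ and let $n<p<q$. Let $\delta>0$ and let $\mathcal{Y}=\{y^0,y^1,\dots,y^p\}\subset\overline{B}(y^0,\delta)$. Let $\mathrm{m}$ be a quadratic polynomial in $n$ variables and suppose there is a constant $\kappa\ge 0$ such that $|\mathrm{m}(y^j)-f(y^j)|\le\kappa\delta^2$ for every $y^j\in\mathcal{Y}$. Let $\mathbf{L}_s\in\mathbb{R}^{p\times n}$ be the matrix whose $i$-th row is $(y^i-y^0)^T$, $i=1,\dots,p$, and let $\hat{\mathbf{L}}_s=\frac{1}{\delta}\mathbf{L}_s$. Assume that $\mathbf{L}_s$ has full column rank ($\operatorname{rank}(\mathbf{L}_s)=n$) and that there is a constant $\kappa_s>0$ with $\|\hat{\mathbf{L}}_s^{\dagger}\|\le\kappa_s$, where $\hat{\mathbf{L}}_s^{\dagger}$ is the Moore--Penrose pseudo-inverse of $\hat{\mathbf{L}}_s$. Assume also that the (constant) Hessian $\mathbf{H}=\nabla^2\mathrm{m}$ of the model satisfies $\|\mathbf{H}\|\le\kappa_H$ for some constant $\kappa_H\ge 0$. Then for all $x\in\mathcal{X}\cap\overline{B}(y^0,\delta)$, \[ |f(x)-\mathrm{m}(x)|\le\Big(\tfrac12(L+\kappa_H)+\kappa+2\kappa_s\sqrt{p}\,\big(L+\kappa+\tfrac34\kappa_H\big)\Big)\delta^2,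 \] \[ \|\nabla f(x)-\nabla\mathrm{m}(x)\|\le 2\kappa_s\sqrt{p}\,\big(L+\kappa+\tfrac34\kappa_H\big)\delta. \]
   Context: $\overline{B}(x,\delta)$ denotes the closed Euclidean ball of center $x$ and radius $\delta$; $\|\cdot\|$ is the Euclidean vector norm and the induced (spectral) matrix norm. $q+1=(n+1)(n+2)/2$ is the dimension of the space of polynomials of degree at most $2$ in $n$ variables. *)

(* Defs.v *)
From HB Require Import structures.
From mathcomp Require Import all_boot all_order all_algebra.
From mathcomp Require Import all_classical all_reals all_analysis.
Set Implicit Arguments. Unset Strict Implicit. Unset Printing Implicit Defensive.
Import Order.TTheory GRing.Theory Num.Theory.
Import numFieldNormedType.Exports.
Local Open Scope classical_set_scope.
Local Open Scope ring_scope.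

Definition enorm (R : realType) (m k : nat) (A : 'M[R]_(m, k)) : R :=
  Num.sqrt (\sum_(i < m) \sum_(j < k) A i j ^+ 2).

Definition specnorm (R : realType) (m k : nat) (A : 'M[R]_(m, k)) : R :=
  sup [set enorm (A *m v) | v in [set v : 'cV[R]_k | enorm v <= 1]].

Definition is_MP_pinv (R : realType) (m k : nat) (A : 'M[R]_(m, k))
  (P : 'M[R]_(k, m)) : Prop :=
  [/\ A *m P *m A = A, P *m A *m P = P,
      (A *m P)^T = A *m P & (P *m A)^T = P *m A].

Definition grad (R : realType) (n : nat) (f : 'rV[R]_n -> R) (x : 'rV[R]_n)
  : 'rV[R]_n :=
  \row_(i < n) ('D_(delta_mx 0 i : 'rV[R]_n) f x).

(* A general quadratic polynomial in n variables:
   m(x) = c + g x^T + 1/2 x H x^T with H symmetric (H is its Hessian). *)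
Definition quad_model (R : realType) (n : nat) (c : R) (g : 'rV[R]_n)
  (H : 'M[R]_n) (x : 'rV[R]_n) : R :=
  c + (g *m x^T) 0 0 + 2^-1 * (x *m H *m x^T) 0 0.

(* Main.v *)
Require Import Defs.
From HB Require Import structures.
From mathcomp Require Import all_boot all_order all_algebra.
From mathcomp Require Import all_classical all_reals all_analysis.
From mathcomp Require Import ring lra.
Import Order.TTheory GRing.Theory Num.Theory.
Import numFieldNormedType.Exports.
Local Open Scope classical_set_scope.
Local Open Scope ring_scope.
Set Implicit Arguments. Unset Strict Implicit.

Section S.
Variable R : realType.

Lemma is_derive_quad (phi : R -> R) (d a b t : R) :
  is_derive t 1 phi d ->
  is_derive t 1 (fun s => phi s - (a * s + b * (s * s))) (d - (a + 2 * b * t)).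
Proof.
move=> Hd.
have Hi : is_derive t 1 (@id R) 1 by exact: is_derive_id.
have H0 := is_deriveZ a Hi.
have H1 := is_deriveM Hi Hi.
have H3 := is_deriveZ b H1.
have H2 := is_deriveD H0 H3.
have H4 := is_deriveB Hd H2.
case: H4 => H5 H6; split.
  exact H5.
rewrite H6 /GRing.scale /=; ring.
Qed.
Lemma mvt_half (phi dphi : R -> R) (K : R) :
  (forall t : R, 0 <= t <= 1 -> is_derive t 1 phi (dphi t)) ->
  (forall t : R, 0 <= t <= 1 -> dphi t <= K) ->
  phi 1 - phi 0 <= K.
Proof.
move=> Hd Hb.
have [c /andP[]] : exists2 c, c \in `[0, 1]%R & phi 1 - phi 0 = dphi c * (1 - 0).
  apply: MVT_segment => //.
    by move=> x; rewrite in_itv /= => /andP[x0 x1]; apply: Hd; rewrite !ltW.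
  apply: derivable_within_continuous => x; rewrite in_itv /= => /andP[x0 x1].
  by have := Hd x; rewrite x0 x1 => /(_ isT) [].
by rewrite !bnd_simp => c0 c1 ->; rewrite subr0 mulr1; apply: Hb; rewrite c0 c1.
Qed.

Lemma mvt_bound (phi dphi : R -> R) (C A B : R) :
  (forall t : R, 0 <= t <= 1 -> is_derive t 1 phi (dphi t)) ->
  (forall t : R, 0 <= t <= 1 -> `|dphi t - C| <= A + B * t) ->
  `|phi 1 - phi 0 - C| <= A + B / 2.
Proof.
move=> Hd Hb.
have h1 := @mvt_half (fun s => phi s - ((C + A) * s + (B / 2) * (s * s)))
   (fun t => dphi t - ((C + A) + 2 * (B / 2) * t)) 0.
have h2 := @mvt_half (fun s => - phi s - ((A - C) * s + (B / 2) * (s * s)))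
   (fun t => - dphi t - ((A - C) + 2 * (B / 2) * t)) 0.
have Hd2 : forall t : R, 0 <= t <= 1 -> is_derive t 1 (fun s => - phi s) (- dphi t).
  move=> t ht; have := Hd t ht => H; have H4 := is_deriveN H.
  case: H4 => H5 H6; split; [exact H5| exact H6].
have := h1 (fun t ht => @is_derive_quad _ _ _ _ t (Hd t ht)) => {h1} h1.
have := h2 (fun t ht => @is_derive_quad _ _ _ _ t (Hd2 t ht)) => {h2} h2.
rewrite ler_norml; apply/andP; split.
  suff: - phi 1 - ((A - C) * 1 + B / 2 * (1 * 1)) - (- phi 0 - ((A - C) * 0 + B / 2 * (0 * 0))) <= 0 by lra.
  apply: h2 => t ht; have := Hb t ht; rewrite ler_norml => /andP[_ _].
  have := Hb t ht; rewrite ler_norml => /andP[? _]. lra.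
suff: phi 1 - ((C + A) * 1 + B / 2 * (1 * 1)) - (phi 0 - ((C + A) * 0 + B / 2 * (0 * 0))) <= 0 by lra.
apply: h1 => t ht; have := Hb t ht; rewrite ler_norml => /andP[_ ?]; lra.
Qed.
End S.
Section Norms.
Variable R : realType.

Lemma cs_sq (T : finType) (a b : T -> R) :
  (\sum_i a i * b i) ^+ 2 <= (\sum_i a i ^+ 2) * (\sum_i b i ^+ 2).
Proof.
set sa := \sum_i a i ^+ 2; set sb := \sum_i b i ^+ 2; set sab := \sum_i a i * b i.
have sa0 : 0 <= sa by apply: sumr_ge0 => i _; apply: sqr_ge0.
have sb0 : 0 <= sb by apply: sumr_ge0 => i _; apply: sqr_ge0.
have [sa0e|sapos] := eqVneq sa 0.
  have a0 : forall i, a i = 0.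
    move=> i; apply/eqP; rewrite -sqrf_eq0; apply/eqP.
    have := @psumr_eq0P _ _ predT (fun i => a i ^+ 2) (fun i _ => sqr_ge0 (a i)).
    by move=> /(_ sa0e i isT).
  rewrite /sab big1 ?expr0n /=; first by rewrite sa0e mul0r.
  by move=> i _; rewrite a0 mul0r.
have sagt : 0 < sa by rewrite lt_def sapos sa0.
set t := sab / sa.
have H : 0 <= \sum_i (t * a i - b i) ^+ 2 by apply: sumr_ge0 => i _; apply: sqr_ge0.
have E : \sum_i (t * a i - b i) ^+ 2 = t ^+ 2 * sa - 2 * t * sab + sb.
  rewrite (eq_bigr (fun i => t ^+ 2 * a i ^+ 2 - (2 * t) * (a i * b i) + b i ^+ 2)); last by move=> i _; ring.
  by rewrite big_split /= sumrB -!mulr_sumr.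
rewrite E /t in H.
have : 0 <= sb * sa - sab ^+ 2.
  have -> : sb * sa - sab ^+ 2 = sa * ((sab / sa) ^+ 2 * sa - 2 * (sab / sa) * sab + sb).
    by field.
  by apply: mulr_ge0 => //; apply: ltW.
rewrite subr_ge0 mulrC //.
Qed.

Definition sq m k (A : 'M[R]_(m, k)) := \sum_(i < m) \sum_(j < k) A i j ^+ 2.

Lemma sq_ge0 m k (A : 'M[R]_(m, k)) : 0 <= sq A.
Proof. by apply: sumr_ge0 => i _; apply: sumr_ge0 => j _; apply: sqr_ge0. Qed.

Lemma enorm_ge0 m k (A : 'M[R]_(m, k)) : 0 <= enorm A.
Proof. exact: sqrtr_ge0. Qed.

Lemma enorm_sqr m k (A : 'M[R]_(m, k)) : enorm A ^+ 2 = sq A.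
Proof. by rewrite /enorm sqr_sqrtr // sq_ge0. Qed.

Lemma enorm_le m k (A : 'M[R]_(m, k)) (c : R) : 0 <= c -> sq A <= c ^+ 2 -> enorm A <= c.
Proof.
move=> c0 h; rewrite -(ler_pXn2r (n:=2)) ?nnegrE ?enorm_ge0 // enorm_sqr //.
Qed.

Lemma enorm_mul m k l (A : 'M[R]_(m, k)) (B : 'M[R]_(k, l)) :
  enorm (A *m B) <= enorm A * enorm B.
Proof.
apply: enorm_le; first by apply: mulr_ge0; apply: enorm_ge0.
rewrite exprMn !enorm_sqr /sq mulr_suml.
apply: (@le_trans _ _ (\sum_(i < m) \sum_(j < l) (\sum_(o < k) A i o ^+ 2) * (\sum_(o < k) B o j ^+ 2))).
  apply: ler_sum => i _; apply: ler_sum => j _; rewrite mxE; exact: cs_sq.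
apply: ler_sum => i _; rewrite exchange_big /= mulr_sumr.
by [].
Qed.

Lemma enorm11 (M : 'M[R]_(1, 1)) : enorm M = `|M 0 0|.
Proof. by rewrite /enorm !big_ord1 sqrtr_sqr. Qed.

Lemma sq_tr m k (A : 'M[R]_(m, k)) : sq A^T = sq A.
Proof. by rewrite /sq exchange_big; apply: eq_bigr => i _; apply: eq_bigr => j _; rewrite mxE. Qed.

Lemma enorm_tr m k (A : 'M[R]_(m, k)) : enorm A^T = enorm A.
Proof. by rewrite /enorm -/(sq _) -/(sq _) sq_tr. Qed.

Lemma enormZ m k (a : R) (A : 'M[R]_(m, k)) : enorm (a *: A) = `|a| * enorm A.
Proof.
rewrite /enorm -sqrtr_sqr -sqrtrM ?sqr_ge0 // mulr_sumr; congr Num.sqrt.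
apply: eq_bigr => i _; rewrite mulr_sumr; apply: eq_bigr => j _; rewrite mxE; ring.
Qed.

Lemma enormN m k (A : 'M[R]_(m, k)) : enorm (- A) = enorm A.
Proof. by rewrite -scaleN1r enormZ normrN normr1 mul1r. Qed.

Lemma enormD m k (A B : 'M[R]_(m, k)) : enorm (A + B) <= enorm A + enorm B.
Proof.
apply: enorm_le; first by apply: addr_ge0; apply: enorm_ge0.
set D := \sum_(i < m) \sum_(j < k) A i j * B i j.
have ED : sq (A + B) = sq A + 2 * D + sq B.
  rewrite /sq /D mulr_sumr -!big_split /=; apply: eq_bigr => i _.
  rewrite mulr_sumr -!big_split /=; apply: eq_bigr => j _; rewrite mxE; ring.
have HD : D <= enorm A * enorm B.
  have h : D ^+ 2 <= (enorm A * enorm B) ^+ 2.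
    rewrite exprMn !enorm_sqr /D /sq !pair_bigA /=; exact: cs_sq.
  apply: le_trans (ler_norm D) _.
  by rewrite -(ler_pXn2r (n:=2)) ?nnegrE ?normr_ge0 ?mulr_ge0 ?enorm_ge0 // real_normK ?num_real.
rewrite ED sqrrD !enorm_sqr; lra.
Qed.

Lemma enormB m k (A B : 'M[R]_(m, k)) : enorm (A - B) <= enorm A + enorm B.
Proof. by rewrite -(enormN B); apply: enormD. Qed.

Lemma enorm_eq0 m k (A : 'M[R]_(m, k)) : enorm A = 0 -> A = 0.
Proof.
move=> h; have : sq A = 0 by rewrite -enorm_sqr h expr0n.
move=> /psumr_eq0P H; apply/matrixP => i j; rewrite mxE.
have H2 := H (fun i _ => sumr_ge0 _ (fun j _ => sqr_ge0 (A i j))) i isT.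
have H3 := @psumr_eq0P _ _ predT (fun j => A i j ^+ 2) (fun j _ => sqr_ge0 (A i j)) H2 j isT.
move: H3 => /eqP.
by rewrite sqrf_eq0 => /eqP.
Qed.

Lemma specnorm_le m k (A : 'M[R]_(m, k)) (v : 'cV[R]_k) :
  enorm (A *m v) <= specnorm A * enorm v.
Proof.
set S := [set enorm (A *m w) | w in [set w : 'cV[R]_k | enorm w <= 1]].
have ubS : has_ubound S.
  exists (enorm A) => _ [w /= hw <-].
  apply: le_trans (enorm_mul _ _) _; rewrite -[X in _ <= X]mulr1.
  by apply: ler_wpM2l => //; apply: enorm_ge0.
have [e0|enz] := eqVneq (enorm v) 0.
  by rewrite e0 (enorm_eq0 e0) mulmx0 mulr0 /enorm big1 ?sqrtr0 // => i _; rewrite big1 // => j _; rewrite mxE expr0n.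
have epos : 0 < enorm v by rewrite lt_def enz enorm_ge0.
set w := (enorm v)^-1 *: v.
have hw : enorm w = 1 by rewrite enormZ ger0_norm ?invr_ge0 ?enorm_ge0 // mulVf.
have : S (enorm (A *m w)) by exists w => //=; rewrite hw.
move=> /(ub_le_sup ubS) h.
have -> : A *m v = enorm v *: (A *m w) by rewrite /w -scalemxAr scalerA divff // scale1r.
rewrite enormZ ger0_norm ?enorm_ge0 // mulrC; apply: ler_wpM2r => //; exact: enorm_ge0.
Qed.


Lemma mmt0 a b (M : 'M[R]_(a, b)) : M *m M^T = 0 -> M = 0.
Proof.
move=> h; apply: enorm_eq0; apply/eqP; rewrite -sqrf_eq0 enorm_sqr /sq; apply/eqP.
apply: big1 => i _.
have e : \sum_j M i j ^+ 2 = (M *m M^T) i i.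
  by rewrite mxE; apply: eq_bigr => j _; rewrite mxE expr2.
by rewrite e h mxE.
Qed.

Lemma gram_unit p n (B : 'M[R]_(p, n)) : \rank B = n -> B^T *m B \in unitmx.
Proof.
move=> rk; rewrite -row_free_unit -kermx_eq0; apply/eqP.
set K := kermx (B^T *m B).
have hK : K *m (B^T *m B) = 0 by apply/sub_kermxP.
have hKB : K *m B^T = 0.
  apply: mmt0; rewrite trmx_mul trmxK mulmxA -(mulmxA K) hK.
  by rewrite mul0mx.
apply/eqP; rewrite -(mulmx_free_eq0 K (B := B^T)); first exact/eqP.
by rewrite /row_free mxrank_tr rk.
Qed.

Lemma pinv_exists p n (A : 'M[R]_(p, n)) : \rank A = n ->
  let P := invmx (A^T *m A) *m A^T in is_MP_pinv A P /\ P *m A = 1%:M.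
Proof.
move=> rk P.
have hu := gram_unit rk.
have PA : P *m A = 1%:M by rewrite /P -mulmxA mulVmx.
split=> //; split.
- by rewrite -mulmxA PA mulmx1.
- by rewrite PA mul1mx.
- rewrite /P trmx_mul trmx_mul trmxK trmx_inv trmx_mul trmxK mulmxA //.
- by rewrite PA trmx1.
Qed.

End Norms.
Section Der.
Variable R : realType.
Variable n : nat.
Implicit Types (F : 'rV[R]_n -> R) (a d : 'rV[R]_n).

Lemma seg_quot F a d (t : R) :
  (fun h : R => h^-1 *: (((fun s : R => F (s *: d + a)) \o shift t) (h *: 1) - F (t *: d + a)))
  = (fun h : R => h^-1 *: ((F \o shift (t *: d + a)) (h *: d) - F (t *: d + a))).
Proof.
apply: funext => h /=; congr (_ *: (F _ - _)).
by rewrite [_%:A]mulr1 scalerDl addrA.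
Qed.

Lemma seg_is_derive F a d (t : R) (D : R) :
  is_derive (t *: d + a) d F D -> is_derive t 1 (fun s => F (s *: d + a)) D.
Proof.
case=> h1 h2; split.
  rewrite /derivable. have -> := seg_quot F a d t. exact: h1.
by rewrite -h2 /derive; have -> := seg_quot F a d t.
Qed.

Lemma seg_is_derive_inv F a d (t : R) (D : R) :
  is_derive t 1 (fun s => F (s *: d + a)) D -> is_derive (t *: d + a) d F D.
Proof.
case=> h1 h2; split.
  move: h1; rewrite /derivable. by have -> := seg_quot F a d t.
by rewrite -h2 /derive; have -> := seg_quot F a d t.
Qed.

Lemma dotE (u v : 'rV[R]_n) : (u *m v^T) 0 0 = \sum_j u 0 j * v 0 j.
Proof. by rewrite mxE; apply: eq_bigr => j _; rewrite mxE. Qed.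

Lemma dot_delta (u : 'rV[R]_n) (j : 'I_n) : (u *m (delta_mx 0 j : 'rV[R]_n)^T) 0 0 = u 0 j.
Proof. by rewrite trmx_delta -colE mxE. Qed.

Lemma grad_dot F z d : differentiable F z -> 'D_d F z = (grad F z *m d^T) 0 0.
Proof.
move=> dF; rewrite deriveE // dotE {1}(row_sum_delta d) linear_sum /=.
apply: eq_bigr => j _; rewrite linearZ /= mxE -deriveE //.
by rewrite /GRing.scale /= mulrC.
Qed.


Definition Bf (H : 'M[R]_n) (u v : 'rV[R]_n) : R := (u *m H *m v^T) 0 0.
Definition Lf (g : 'rV[R]_n) (u : 'rV[R]_n) : R := (g *m u^T) 0 0.

Lemma BfDl H u v w : Bf H (u + v) w = Bf H u w + Bf H v w.
Proof. by rewrite /Bf !mulmxDl mxE. Qed.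
Lemma BfZl H s u w : Bf H (s *: u) w = s * Bf H u w.
Proof. by rewrite /Bf -!scalemxAl mxE. Qed.
Lemma BfDr H u v w : Bf H u (v + w) = Bf H u v + Bf H u w.
Proof. by rewrite /Bf linearD /= !mulmxDr mxE. Qed.
Lemma BfZr H s u w : Bf H u (s *: w) = s * Bf H u w.
Proof. by rewrite /Bf linearZ /= -!scalemxAr mxE. Qed.
Lemma BfC H u v : H^T = H -> Bf H u v = Bf H v u.
Proof.
move=> hH; rewrite /Bf.
have -> : (u *m H *m v^T) 0 0 = ((u *m H *m v^T)^T) 0 0 by rewrite [RHS]mxE.
by rewrite !trmx_mul trmxK hH mulmxA.
Qed.
Lemma LfD g u v : Lf g (u + v) = Lf g u + Lf g v.
Proof. by rewrite /Lf linearD /= mulmxDr mxE. Qed.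
Lemma LfZ g s u : Lf g (s *: u) = s * Lf g u.
Proof. by rewrite /Lf linearZ /= -scalemxAr mxE. Qed.

Lemma qmE c g H z : quad_model c g H z = c + Lf g z + 2^-1 * Bf H z z.
Proof. by []. Qed.

Lemma qm_seg c g H a d (s : R) : H^T = H ->
  quad_model c g H (s *: d + a) =
  quad_model c g H a + s * (Lf g d + Bf H a d) + s * s * (2^-1 * Bf H d d).
Proof.
move=> hH; rewrite !qmE LfD LfZ !BfDl !BfDr !BfZl !BfZr (BfC d a hH).
move: (Lf g d) (Lf g a) (Bf H d d) (Bf H a d) (Bf H a a) => A1 A2 B1 B2 B3.

by field.
Qed.

Lemma grad_qm (c : R) (g : 'rV[R]_n) (H : 'M[R]_n) (x : 'rV[R]_n) : H^T = H -> grad (quad_model c g H) x = g + x *m H.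
Proof.
move=> hH; apply/rowP => j; rewrite !mxE.
set d := delta_mx 0 j : 'rV[R]_n.
have h : is_derive (0 : R) 1 (fun s => quad_model c g H (s *: d + x)) (Lf g d + Bf H x d).
  have e : (fun s => quad_model c g H (s *: d + x)) =
     (fun s => quad_model c g H x + s * (Lf g d + Bf H x d) + s * s * (2^-1 * Bf H d d)).
    by apply: funext => s; rewrite qm_seg.
  have e2 : (fun s => quad_model c g H x + s * (Lf g d + Bf H x d) + s * s * (2^-1 * Bf H d d)) =
     (fun s => cst (quad_model c g H x) s - ((- (Lf g d + Bf H x d)) * s + (- (2^-1 * Bf H d d)) * (s * s))).
    by apply: funext => s; rewrite /cst; ring.
  rewrite e e2.
  have h0 := @is_derive_quad R (cst (quad_model c g H x)) 0 (- (Lf g d + Bf H x d)) (- (2^-1 * Bf H d d)) 0 (is_derive_cst _ _ _).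
  case: h0 => h1 h2; split; first exact h1.
  by rewrite h2 mulr0 addr0 sub0r opprK.
have := seg_is_derive_inv h; rewrite scale0r add0r => h2.
rewrite (@derive_val _ _ _ _ _ _ _ h2) /Lf /Bf /d !dot_delta.
by rewrite mxE.
Qed.
End Der.

Section Main.
Variable R : realType.
Variable n : nat.

Lemma dot_bound (u v : 'rV[R]_n) : `|(u *m v^T) 0 0| <= enorm u * enorm v.
Proof. by rewrite -enorm11 -(enorm_tr v); apply: enorm_mul. Qed.

Lemma enorm_delta (j : 'I_n) : enorm (delta_mx 0 j : 'rV[R]_n) = 1.
Proof.
rewrite /enorm big_ord1 (bigD1 j) //= big1 ?addr0 ?mxE ?eqxx /= ?expr1n ?sqrtr1 //.
by move=> i /negbTE hi; rewrite mxE hi andbF expr0n.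
Qed.

Lemma seg_bound (f : 'rV[R]_n -> R) (a d x : 'rV[R]_n) (A B : R) :
  (forall t : R, 0 <= t <= 1 -> differentiable f (t *: d + a)) ->
  (forall t : R, 0 <= t <= 1 -> enorm (grad f (t *: d + a) - grad f x) * enorm d <= A + B * t) ->
  `|f (d + a) - f a - (grad f x *m d^T) 0 0| <= A + B / 2.
Proof.
move=> hd hb.
have := @mvt_bound R (fun s => f (s *: d + a)) (fun t => (grad f (t *: d + a) *m d^T) 0 0)
   ((grad f x *m d^T) 0 0) A B.
rewrite scale1r scale0r add0r; apply.
  move=> t ht; apply: seg_is_derive.
  have h := derivableP (@diff_derivable _ _ _ _ _ d (hd t ht)).
  by rewrite -grad_dot //; apply: hd.
move=> t ht; apply: le_trans (hb t ht).
have e : (grad f (t *: d + a) *m d^T) 0 0 - (grad f x *m d^T) 0 0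
   = ((grad f (t *: d + a) - grad f x) *m d^T) 0 0.
  by rewrite mulmxBl !mxE.

rewrite e.
exact: dot_bound.
Qed.


Lemma mpart (c : R) (g : 'rV[R]_n) (H : 'M[R]_n) (a d x : 'rV[R]_n) : H^T = H ->
  quad_model c g H (d + a) - quad_model c g H a - ((g + x *m H) *m d^T) 0 0
  = Bf H (a + 2^-1 *: d - x) d.
Proof.
move=> hH; have := qm_seg c g a d 1 hH; rewrite scale1r => ->.
have -> : ((g + x *m H) *m d^T) 0 0 = Lf g d + Bf H x d by rewrite mulmxDl mxE.
rewrite !BfDl (BfZl H (2^-1) d d) -(scaleN1r x) (BfZl H (-1) x d).
move: (Lf g d) (Bf H a d) (Bf H d d) (Bf H x d) => A1 B1 B2 B3.
by field.
Qed.

Lemma mbound (H : 'M[R]_n) (w d : 'rV[R]_n) (kH : R) :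
  specnorm H <= kH -> H^T = H -> `|Bf H w d| <= kH * enorm w * enorm d.
Proof.
move=> hk hH; rewrite /Bf; apply: le_trans (dot_bound _ _) _.
apply: ler_wpM2r; first exact: enorm_ge0.
rewrite -enorm_tr trmx_mul hH; apply: le_trans (specnorm_le _ _) _.
rewrite enorm_tr; apply: ler_wpM2r => //; exact: enorm_ge0.
Qed.


Lemma enorm0 m k : enorm (0 : 'M[R]_(m, k)) = 0.
Proof. by rewrite /enorm big1 ?sqrtr0 // => i _; rewrite big1 // => j _; rewrite mxE expr0n. Qed.

End Main.
Unset Implicit Arguments.

Theorem theorem2 (R : realType) (n p : nat)
  (f : 'rV[R]_n -> R) (X : set 'rV[R]_n) (Lc : R)
  (y : 'I_p.+1 -> 'rV[R]_n) (delta kappa kappa_s kappa_H : R)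
  (c : R) (g : 'rV[R]_n) (H : 'M[R]_n) :
  (exists lb : R, forall x, lb <= f x) ->
  open X -> bounded_set X ->
  (forall x, X x -> differentiable f x) ->
  (forall x z, X x -> X z -> enorm (grad f x - grad f z) <= Lc * enorm (x - z)) ->
  (* X is "sufficiently large": it contains the closed ball B(y^0, delta) *)
  [set x | enorm (x - y ord0) <= delta] `<=` X ->
  (n < p)%N -> (p < (n * n + 3 * n)./2)%N ->
  0 < delta ->
  (forall j, enorm (y j - y ord0) <= delta) ->
  H^T = H ->
  0 <= kappa ->
  (forall j, `|quad_model c g H (y j) - f (y j)| <= kappa * delta ^+ 2) ->
  let Ls : 'M[R]_(p, n) :=
    \matrix_(i < p, j < n) (y (lift ord0 i) 0 j - y ord0 0 j) in
  let Lhat := delta^-1 *: Ls in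
  \rank Ls = n ->
  0 < kappa_s ->
  (forall P, is_MP_pinv Lhat P -> specnorm P <= kappa_s) ->
  0 <= kappa_H -> specnorm H <= kappa_H ->
  forall x, X x -> enorm (x - y ord0) <= delta ->
    `|f x - quad_model c g H x|
      <= (2^-1 * (Lc + kappa_H) + kappa
          + 2 * kappa_s * Num.sqrt (p%:R) * (Lc + kappa + 3 / 4 * kappa_H))
         * delta ^+ 2
    /\
    enorm (grad f x - grad (quad_model c g H) x)
      <= 2 * kappa_s * Num.sqrt (p%:R) * (Lc + kappa + 3 / 4 * kappa_H) * delta.
Proof.
move=> _ _ _ dfX Lip ballX np pq dpos yball hH k0 Hk Ls Lhat rk ks0 Hks kH0 HH x Xx xball.
rewrite grad_qm //.
set y0 := y ord0.
have inX : forall z, enorm (z - y0) <= delta -> X z := fun z hz => ballX z hz.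
have d0 : 0 <= delta := ltW dpos.
have n0 : (0 < n)%N.
  rewrite lt0n; apply/eqP => e; move: pq; rewrite e /=.
  by rewrite ltn0.
have L0 : 0 <= Lc.
  pose i0 : 'I_n := Ordinal n0.
  set z := delta *: delta_mx 0 i0 + y0.
  have ez : enorm (z - y0) = delta by rewrite /z addrK enormZ enorm_delta gtr0_norm // mulr1.
  have hz : X z by apply: inX; rewrite ez.
  have hy : X y0 by apply: inX; rewrite subrr enorm0.
  have := Lip z y0 hz hy.
  rewrite ez => h; have := le_trans (enorm_ge0 _) h.
  by rewrite pmulr_lge0.
set K := 2 * (Lc + kappa + 3 / 4 * kappa_H).
have K0 : 0 <= K by rewrite /K; lra.
set eg := grad f x - (g + x *m H).
have dx : enorm (y0 - x) <= delta by rewrite -enormN opprB.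
have egd : forall d : 'rV[R]_n, (eg *m d^T) 0 0 = (grad f x *m d^T) 0 0 - ((g + x *m H) *m d^T) 0 0.
  by move=> d; rewrite /eg mulmxBl !mxE.
have C1 : forall i : 'I_p, `|(eg *m (y (lift ord0 i) - y0)^T) 0 0| <= K * delta ^+ 2.
  move=> i; set yi := y (lift ord0 i); set d := yi - y0.
  have hd : enorm d <= delta := yball _.
  have ed0 := enorm_ge0 d.
  have eyi : yi = d + y0 by rewrite subrK.
  have hz : forall t : R, 0 <= t <= 1 -> enorm (t *: d + y0 - y0) <= t * delta.
    move=> t /andP[t0 t1]; rewrite addrK enormZ ger0_norm //.
    by apply: ler_wpM2l.
  have F1 := @seg_bound R n f y0 d x (Lc * delta ^+ 2) (Lc * delta ^+ 2).
  have F2 : `|f (d + y0) - f y0 - (grad f x *m d^T) 0 0| <= Lc * delta ^+ 2 + Lc * delta ^+ 2 / 2.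
    apply: F1.
      move=> t ht; apply: dfX; apply: inX; apply: le_trans (hz t ht) _.
      by case/andP: ht => t0 t1; rewrite -[X in _ <= X]mul1r ler_wpM2r.
    move=> t ht; have [t0 t1] := andP ht.
    have Xz : X (t *: d + y0).
      by apply: inX; apply: le_trans (hz t ht) _; rewrite -[X in _ <= X]mul1r ler_wpM2r.
    have h1 := Lip _ _ Xz Xx.
    have h2 : enorm (t *: d + y0 - x) <= t * delta + delta.
      have -> : t *: d + y0 - x = (t *: d + y0 - y0) + (y0 - x) by rewrite addrK addrA.
      apply: le_trans (enormD _ _) _; apply: lerD => //; exact: hz.
    apply: le_trans (ler_wpM2r ed0 h1) _.
    apply: (@le_trans _ _ (Lc * (t * delta + delta) * delta)).
      apply: ler_pM => //; first by apply: mulr_ge0 => //; exact: enorm_ge0.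
      by apply: ler_wpM2l.
    have -> : Lc * (t * delta + delta) * delta = Lc * delta ^+ 2 + Lc * delta ^+ 2 * t by ring.
    by [].
  have M1 := @mpart R n c g H y0 d x hH.
  have hw : enorm (y0 + 2^-1 *: d - x) <= delta + 2^-1 * delta.
    rewrite addrAC; apply: le_trans (enormD _ _) _; apply: lerD => //.
    by rewrite enormZ ger0_norm ?invr_ge0 ?ler0n // ler_wpM2l // invr_ge0 ler0n.
  have MB := @mbound R n H (y0 + 2^-1 *: d - x) d kappa_H HH hH.
  have MB2 : kappa_H * enorm (y0 + 2^-1 *: d - x) * enorm d <= kappa_H * (delta + 2^-1 * delta) * delta.
    apply: ler_pM => //; first by apply: mulr_ge0 => //; exact: enorm_ge0.
    by apply: ler_wpM2l.
  have hk1 := Hk (lift ord0 i); have hk0 := Hk ord0.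
  rewrite -/y0 -/yi in hk1 hk0.
  rewrite -eyi in F2 M1; rewrite -M1 in MB.
  have LD : 0 <= Lc * delta ^+ 2 by apply: mulr_ge0 => //; apply: sqr_ge0.
  have MB3 := le_trans MB MB2.
  rewrite egd.
  move: F2 MB3 hk1 hk0; rewrite /K !ler_norml.
  move=> /andP[? ?] /andP[? ?] /andP[? ?] /andP[? ?].
  apply/andP; split; lra.
have ent : forall i : 'I_p, (Lhat *m eg^T) i 0 = delta^-1 * (eg *m (y (lift ord0 i) - y0)^T) 0 0.
  move=> i; rewrite /Lhat -scalemxAl [LHS]mxE; congr (_ * _).
  rewrite !mxE; apply: eq_bigr => j _; rewrite !mxE mulrC.
  by [].
have C2 : enorm (Lhat *m eg^T) <= Num.sqrt (p%:R) * (K * delta).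
  have Kd0 : 0 <= K * delta by apply: mulr_ge0.
  apply: enorm_le; first by apply: mulr_ge0 => //; apply: sqrtr_ge0.
  rewrite /sq.
  apply: (@le_trans _ _ (\sum_(i < p) (K * delta) ^+ 2)).
    apply: ler_sum => i _; rewrite big_ord1 ent.
    have hi := C1 i.
    have : `|delta^-1 * (eg *m (y (lift ord0 i) - y0)^T) 0 0| <= K * delta.
      rewrite normrM ger0_norm ?invr_ge0 //.
      rewrite -(@ler_pM2l _ delta) // mulrA mulfV ?gt_eqF // mul1r.
      by rewrite mulrCA -expr2.
    set e := delta^-1 * _ => he.
    rewrite -real_normK ?num_real //.
    by rewrite -(ler_pXn2r (n:=2)) ?nnegrE ?normr_ge0 // in he.
  rewrite sumr_const card_ord [X in _ <= X]exprMn sqr_sqrtr ?ler0n // mulr_natl.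
  by [].
have C3 : enorm eg <= kappa_s * (Num.sqrt (p%:R) * (K * delta)).
  have rkh : \rank Lhat = n by rewrite /Lhat mxrank_scale_nz ?rk // invr_eq0 gt_eqF.
  have [hP PA] := pinv_exists rkh.
  have sP := Hks _ hP.
  rewrite -enorm_tr.
  have -> : eg^T = (invmx (Lhat^T *m Lhat) *m Lhat^T) *m (Lhat *m eg^T) by rewrite mulmxA PA mul1mx.
  apply: le_trans (specnorm_le _ _) _.
  apply: le_trans (ler_wpM2r (enorm_ge0 _) sP) _.
  by apply: ler_wpM2l; [exact: ltW|].
have Kdef : 2 * kappa_s * Num.sqrt (p%:R) * (Lc + kappa + 3 / 4 * kappa_H) * delta
   = kappa_s * (Num.sqrt (p%:R) * (K * delta)) by rewrite /K; ring.
split; last by rewrite Kdef.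
set d := x - y0.
have ex : x = d + y0 by rewrite subrK.
have hd : enorm d <= delta := xball.
have ed0 := enorm_ge0 d.
have F2 : `|f (d + y0) - f y0 - (grad f x *m d^T) 0 0| <= Lc * delta ^+ 2 + (- (Lc * delta ^+ 2)) / 2.
  apply: (@seg_bound R n f y0 d x).
    move=> t /andP[t0 t1]; apply: dfX; apply: inX.
    rewrite addrK enormZ ger0_norm //; apply: le_trans hd; rewrite -[X in _ <= X]mul1r.
    by apply: ler_wpM2r.
  move=> t /andP[t0 t1].
  have ez : t *: d + y0 - x = (1 - t) *: (y0 - x).
    by apply/rowP => j; rewrite /d !mxE; ring.
  have Xz : X (t *: d + y0).
    apply: inX; rewrite addrK enormZ ger0_norm //; apply: le_trans hd; rewrite -[X in _ <= X]mul1r.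
    by apply: ler_wpM2r.
  have h1 := Lip _ _ Xz Xx.
  have e2 : enorm (t *: d + y0 - x) = (1 - t) * enorm d.
    rewrite ez enormZ ger0_norm; last by rewrite subr_ge0.
    by rewrite -enormN opprB.
  rewrite e2 in h1.
  apply: le_trans (ler_wpM2r ed0 h1) _.
  have t10 : 0 <= 1 - t by rewrite subr_ge0.
  have dd : enorm d * enorm d <= delta ^+ 2 by rewrite expr2; apply: ler_pM.
  have -> : Lc * ((1 - t) * enorm d) * enorm d = (Lc * (1 - t)) * (enorm d * enorm d) by ring.
  apply: le_trans (ler_wpM2l (mulr_ge0 L0 t10) dd) _.
  by rewrite le_eqVlt; apply/orP; left; apply/eqP; ring.
have M1 := @mpart R n c g H y0 d x hH.
have hw : enorm (y0 + 2^-1 *: d - x) <= 2^-1 * delta.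
  have -> : y0 + 2^-1 *: d - x = 2^-1 *: (y0 - x).
    by apply/rowP => j; rewrite /d !mxE; field.
  by rewrite enormZ ger0_norm ?invr_ge0 ?ler0n // ler_wpM2l // invr_ge0 ler0n.
have MB := @mbound R n H (y0 + 2^-1 *: d - x) d kappa_H HH hH.
have MB2 : kappa_H * enorm (y0 + 2^-1 *: d - x) * enorm d <= kappa_H * (2^-1 * delta) * delta.
  apply: ler_pM => //; first by apply: mulr_ge0 => //; exact: enorm_ge0.
  by apply: ler_wpM2l.
have hk0 := Hk ord0; rewrite -/y0 in hk0.
have EB : `|(eg *m d^T) 0 0| <= kappa_s * (Num.sqrt (p%:R) * (K * delta)) * delta.
  apply: le_trans (dot_bound _ _) _; apply: ler_pM => //; exact: enorm_ge0.
rewrite -ex in F2 M1; rewrite -M1 in MB.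
have MB3 := le_trans MB MB2.
rewrite egd in EB.
move: F2 MB3 hk0 EB; rewrite /K !ler_norml.
move=> /andP[? ?] /andP[? ?] /andP[? ?] /andP[? ?].
apply/andP; split; lra.
Qed.
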